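(* Let $a,b$ be as in the context and let $w=(w_n)_{n\ge0}$ be a sequence of complex numbers. If $$\sup_{n\ge0}\Big|\frac{w_na_n}{a_{n+1}}\Big|<\infty\quad\text{and}\quad\limsup_{n\to\infty}\Big|\frac{b_n}{a_{n+1}}\Big|<1,$$ then, with $c_n:=w_{n+1}\frac{b_n}{a_{n+2}}-w_n\frac{a_n}{a_{n+1}}\frac{b_{n+1}}{a_{n+2}}$, one has $\sup_{n\ge0}|c_n|<\infty$ and $\sum_{n=3}^{\infty}\sup_{j\ge0}\big|c_j\prod_{k=3}^{n}\frac{b_{j+k-1}}{a_{j+k}}\big|<\infty$; consequently $F_w$ is a bounded operator on $\ell^p_{a,b}$ for every $1\le p<\infty$ and on $c_{0,a,b}$.
   Context: Let $a=(a_n)_{n\ge0}$, $b=(b_n)_{n\ge0}$ be sequences of nonzero complex numbers with $\limsup_{n\to\infty}(|a_n|+|b_n|)^{1/n}<\infty$, and let $R=1/\limsup_{n}(|a_n|+|b_n|)^{1/n}\in(0,\infty]$. For $n\ge0$ let $f_n(z)=(a_n+b_nz)z^n$. For $1\le p<\infty$, $\ell^p_{a,b}$ is the space of analytic functions on $\{|z|<R\}$ of the form $f=\sum_{n\ge0}\lambda_nf_n$ with $(\lambda_n)\in\ell^p(\mathbb{N}_0)$ (the series converges locally uniformly on $\{|z|<R\}$ and the $\lambda_n$ are uniquely determined by $f$), normed by $\|f\|=(\sum_n|\lambda_n|^p)^{1/p}$; thus $\{f_n\}$ is a normalized Schauder basis equivalent to the standard basis of $\ell^p(\mathbb{N}_0)$.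 The space $c_{0,a,b}$ is defined in the same way with $(\lambda_n)\in c_0(\mathbb{N}_0)$ and norm $\sup_n|\lambda_n|$. For a sequence $w=(w_n)_{n\ge0}$, the weighted forward shift is $F_w\big(\sum_{n\ge0}\mu_nz^n\big)=\sum_{n\ge0}\mu_nw_nz^{n+1}$ (acting on power series); ''bounded on $X$'' means $F_w$ maps $X$ into $X$ and is a bounded operator. *)

(* Defs.v *)
From HB Require Import structures.
From mathcomp Require Import all_boot all_order all_algebra.
From mathcomp Require Import all_classical all_reals all_analysis.
From mathcomp Require Import complex.
Set Implicit Arguments. Unset Strict Implicit. Unset Printing Implicit Defensive.
Import Order.TTheory GRing.Theory Num.Theory numFieldNormedType.Exports.
Local Open Scope ring_scope.
Local Open Scope classical_set_scope.

(* Elements of l^p_{a,b} / c_{0,a,b} are represented by their coefficient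
   sequence lambda (which is uniquely determined by the function).  The Taylor
   coefficients of f = sum_n lambda_n (a_n + b_n z) z^n are
   mu_m = a_m lambda_m + b_{m-1} lambda_{m-1}  (with lambda_{-1} = 0). *)
Definition ab_coef (R : realType) (a b lam : nat -> R[i]) (m : nat) : R[i] :=
  a m * lam m + (if m is k.+1 then b k * lam k else 0).

(* The weighted forward shift acting on power series coefficients:
   F_w (sum mu_n z^n) = sum mu_n w_n z^{n+1}. *)
Definition Fw (R : realType) (w mu : nat -> R[i]) (m : nat) : R[i] :=
  if m is k.+1 then mu k * w k else 0.

Definition in_lp (R : realType) (p : R) (lam : nat -> R[i]) : Prop :=
  (\sum_(0 <= n <oo) ((Normc.normc (lam n)) `^ p)%:E < +oo)%E.

Definition lp_norm (R : realType) (p : R) (lam : nat -> R[i]) : R :=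
  (fine (\sum_(0 <= n <oo) ((Normc.normc (lam n)) `^ p)%:E)%E) `^ p^-1.

Definition in_c0 (R : realType) (lam : nat -> R[i]) : Prop :=
  (fun n => Normc.normc (lam n)) @ \oo --> (0 : R).

Definition sup_norm (R : realType) (lam : nat -> R[i]) : R :=
  fine (ereal_sup (range (fun n => (Normc.normc (lam n))%:E))).

(* F_w is bounded on the sequence-space model (X, nrm) of
   {f = sum_n lambda_n f_n : lambda in X}, normed by nrm lambda:
   F_w maps each such f into the space, with norm control. *)
Definition Fw_bounded_on (R : realType) (a b w : nat -> R[i])
    (X : (nat -> R[i]) -> Prop) (nrm : (nat -> R[i]) -> R) : Prop :=
  exists C : R, 0 <= C /\
    forall lam, X lam ->
      exists nu, X nu /\ ab_coef a b nu = Fw w (ab_coef a b lam) /\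
                 nrm nu <= C * nrm lam.

Definition cseq (R : realType) (a b w : nat -> R[i]) (n : nat) : R[i] :=
  w n.+1 * (b n / a n.+2) - w n * (a n / a n.+1) * (b n.+1 / a n.+2).

(* Main.v *)
Require Import Defs.
From HB Require Import structures.
From mathcomp Require Import all_boot all_order all_algebra.
From mathcomp Require Import all_classical all_reals all_analysis.
From mathcomp Require Import complex.
From mathcomp Require Import ring lra zify.
Import Order.TTheory GRing.Theory Num.Theory numFieldNormedType.Exports.
Local Open Scope ring_scope.
Local Open Scope classical_set_scope.
Local Notation nc := (@Normc.normc _).
Section Real.
Context {R : realType}.
Lemma convp (p t X Y : R) : 1 <= p -> 0 <= t -> t <= 1 -> 0 <= X -> 0 <= Y ->
  (t*X + (1-t)*Y) `^ p <= t * X`^p + (1-t)*Y`^p.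
Proof.
move=> p1 t0 t1 X0 Y0.
have := convex_powR p1 (Itv01 t0 t1) .
move=> /(_ X Y); rewrite !inE /= !in_itv /= X0 Y0 => /(_ erefl erefl).
by rewrite !convRE.
Qed.

Lemma powR_le (p x y : R) : 0 <= p -> 0 <= x -> x <= y -> x `^ p <= y `^ p.
Proof.
move=> p0 x0 xy; apply: (ge0_ler_powR p0) => //; rewrite nnegrE //.
exact: le_trans xy.
Qed.

Lemma L_contr (p q : R) (u y : nat -> R) : 1 <= p -> 0 <= q -> q < 1 ->
  (forall m, 0 <= u m) -> (forall m, 0 <= y m) -> u 0%N = 0 ->
  (forall m, u m.+1 <= y m.+1 + q * u m) ->
  forall n, \sum_(m < n) (u m) `^ p <= \sum_(m < n) (y m / (1 - q)) `^ p.
Proof.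
move=> p1 q0 q1 u0 y0 u00 hu.
have p0 : 0 < p by apply: lt_le_trans p1.
set s := 1 - q.
have s0 : 0 < s by rewrite /s subr_gt0.
have step m : (u m.+1) `^ p <= s * (y m.+1 / s) `^ p + q * (u m) `^ p.
  apply: le_trans (_ : (s * (y m.+1 / s) + (1 - s) * u m) `^ p <= _).
    apply: powR_le; rewrite ?(ltW p0) ?u0 //.
    rewrite mulrCA divff ?gt_eqF // mulr1.
    have -> : 1 - s = q by rewrite /s opprB addrC subrK.
    exact: hu.
  have -> : q = 1 - s by rewrite /s opprB addrC subrK.
  apply: convp => //; first exact: ltW.
  - by rewrite /s gerBl.
  - by rewrite divr_ge0 // ltW.
case=> [|n]; first by rewrite !big_ord0.
set T := \sum_(m < n.+1) _.
set Y := \sum_(m < n.+1) _.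
have hT : T = \sum_(m < n) (u m.+1) `^ p.
  by rewrite /T big_ord_recl /= u00 powR0 ?gt_eqF // add0r.
have hTn : \sum_(m < n) (u m) `^ p <= T.
  by rewrite /T big_ord_recr /= lerDl powR_ge0.
have hYn : \sum_(m < n) (y m.+1 / s) `^ p <= Y.
  by rewrite /Y big_ord_recl /= lerDr powR_ge0.
have : T <= s * Y + q * T.
  rewrite {1}hT; apply: le_trans (_ : \sum_(m < n) (s * (y m.+1 / s) `^ p + q * (u m) `^ p) <= _).
    by apply: ler_sum => i _; apply: step.
  rewrite big_split /= -!mulr_sumr; apply: lerD.
    by rewrite ler_pM2l.
  by apply: ler_wpM2l.
rewrite -lerBlDr -{1}(mul1r T) -mulrBl -/s ler_pM2l //.
Qed.
End Real.

Section NC.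
Context {R : realType}.
Lemma nc_ge0 (z : R[i]) : 0 <= nc z.
Proof. by case: z => x y; apply: sqrtr_ge0. Qed.
Lemma ncD (x y : R[i]) : nc (x + y) <= nc x + nc y.
Proof. exact: (@le_normcD R x y). Qed.
Lemma ncB (x y : R[i]) : nc (x - y) <= nc x + nc y.
Proof. by apply: le_trans (ncD _ _) _; rewrite (@normcN R). Qed.
Lemma ncM (x y : R[i]) : nc (x * y) = nc x * nc y.
Proof. exact: Normc.normcM. Qed.
Lemma nc0 : nc (0 : R[i]) = 0.
Proof. exact: Normc.normc0. Qed.
End NC.

Section Ser.
Context {R : realType}.
Local Open Scope ereal_scope.
Lemma nnser_le (x : nat -> R) N (B : R) : (forall n, (0 <= x n)%R) ->
  (forall n, (\sum_(N <= i < n) x i <= B)%R) -> \sum_(N <= i <oo) (x i)%:E <= B%:E.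
Proof.
move=> x0 hB; apply: lime_le.
  by apply: is_cvg_nneseries => n _; rewrite lee_fin.
by apply: nearW => n; rewrite sumEFin lee_fin.
Qed.

Lemma nnser_ge (x : nat -> R) N n : (forall n, (0 <= x n)%R) ->
  (\sum_(N <= i < n) x i)%:E <= \sum_(N <= i <oo) (x i)%:E.
Proof.
by move=> x0; rewrite -sumEFin; apply: nneseries_lim_ge => k _ _; rewrite lee_fin.
Qed.

Lemma nnser_fin (x : nat -> R) N : (forall n, (0 <= x n)%R) ->
  \sum_(N <= i <oo) (x i)%:E < +oo ->
  \sum_(N <= i <oo) (x i)%:E = (fine (\sum_(N <= i <oo) (x i)%:E))%:E.
Proof.
move=> x0 hf; rewrite fineK // fin_num_abs gee0_abs //.
by apply: nneseries_ge0 => i _ _; rewrite lee_fin.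
Qed.

Lemma sup_props (f : nat -> R) (B : R) : (forall n, (0 <= f n)%R) -> (forall n, (f n <= B)%R) ->
  let S := ereal_sup (range (fun n => (f n)%:E)) in
  S = (fine S)%:E /\ (forall n, (f n <= fine S)%R) /\ (fine S <= B)%R.
Proof.
move=> f0 fB S.
have h1 : S <= B%:E by apply: ub_ereal_sup => _ [n _ <-]; rewrite lee_fin.
have h2 n : (f n)%:E <= S by apply: ereal_sup_ubound; exists n.
have h0 : 0 <= S by apply: le_trans (h2 0%N); rewrite lee_fin.
have hS : S = (fine S)%:E.
  rewrite fineK //; rewrite ge0_fin_numE //; exact: (le_lt_trans h1 (ltry _)).
split => //; split.
  by move=> n; rewrite -lee_fin -hS.
by rewrite -lee_fin -hS.
Qed.
End Ser.


Section Real2.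
Context {R : realType}.
Lemma ev_get (f : nat -> R) : f @ \oo --> (0:R) -> forall e, 0 < e -> exists N, forall n, (N <= n)%N -> `|f n| <= e.
Proof.
move=> /cvgrPdist_le h e e0; have := h e e0.
case=> N _ hN; exists N => n hn. have := hN n hn. by rewrite sub0r normrN.
Qed.
Lemma ev_put (f : nat -> R) : (forall e, 0 < e -> exists N, forall n, (N <= n)%N -> `|f n| <= e) -> f @ \oo --> (0:R).
Proof.
move=> h; apply/cvgrPdist_le => e e0; have [N hN] := h e e0.
exists N => // n hn; rewrite sub0r normrN; exact: hN.
Qed.

Lemma contr_bound (u y : nat -> R) (q Y : R) : 0 <= q -> q < 1 -> 0 <= Y -> u 0%N = 0 ->
  (forall m, y m <= Y) -> (forall m, u m.+1 <= y m.+1 + q * u m) ->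
  forall m, u m <= Y / (1 - q).
Proof.
move=> q0 q1 Y0 u0 hy hu; have s0 : 0 < 1 - q by rewrite subr_gt0.
elim=> [|m ih]; first by rewrite u0 divr_ge0 // ltW.
apply: le_trans (hu m) _.
apply: le_trans (_ : Y + q * (Y / (1 - q)) <= _).
  by apply: lerD => //; apply: ler_wpM2l.
have -> : Y + q * (Y / (1 - q)) = Y / (1 - q) by field; rewrite gt_eqF.
by [].
Qed.

Lemma contr_cvg (u y : nat -> R) (q U : R) : 0 <= q -> q < 1 -> (forall m, 0 <= u m) ->
  (forall m, u m <= U) ->
  (forall e, 0 < e -> exists N, forall n, (N <= n)%N -> y n <= e) ->
  (forall m, u m.+1 <= y m.+1 + q * u m) ->
  forall e, 0 < e -> exists N, forall n, (N <= n)%N -> u n <= e.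
Proof.
move=> q0 q1 u0 hU hy hu e e0; have s0 : 0 < 1 - q by rewrite subr_gt0.
have U0 : 0 <= U by apply: le_trans (u0 0%N) (hU 0%N).
set d := e * (1 - q) / 2.
have d0 : 0 < d by rewrite /d divr_gt0 // mulr_gt0.
have [N1 hN1] := hy d d0.
have key k : u (N1 + k)%N <= d / (1 - q) + q ^+ k * U.
  elim: k => [|k ih]; first by rewrite addn0 expr0 mul1r; apply: le_trans (hU _) _; rewrite lerDr divr_ge0 // ltW.
  rewrite addnS; apply: le_trans (hu _) _.
  apply: le_trans (_ : d + q * (d / (1 - q) + q ^+ k * U) <= _).
    apply: lerD; first by apply: hN1; rewrite -addnS leq_addr.
    by apply: ler_wpM2l.
  have -> : d + q * (d / (1 - q) + q ^+ k * U) = d / (1 - q) + q ^+ k.+1 * U.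
    by rewrite exprS; field; rewrite gt_eqF.
  by [].
have hq : `|q| < 1 by rewrite ger0_norm.
have ep : 0 < e / 2 / (U + 1) by rewrite !divr_gt0 // ltr_wpDl.
have [k0 hk0] := @ev_get (fun n => q ^+ n) (cvg_expr hq) _ ep.
exists (N1 + k0)%N => n hn.
have -> : n = (N1 + (n - N1))%N by rewrite subnKC // (leq_trans (leq_addr _ _) hn).
apply: le_trans (key _) _.
have hk : (k0 <= n - N1)%N by rewrite leq_subRL // (leq_trans (leq_addr _ _) hn).
have e1 : d / (1 - q) = e / 2 by rewrite /d; field; rewrite gt_eqF.
rewrite e1 [e in _ <= e](splitr e) lerD2l.
have := hk0 _ hk; rewrite ger0_norm ?exprn_ge0 // => hqk.
apply: le_trans (_ : e / 2 / (U + 1) * U <= _).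
  by apply: ler_wpM2r.
rewrite mulrAC ler_pdivrMr ?ltr_wpDl //.
by apply: ler_wpM2l; [rewrite divr_ge0 // ltW | rewrite lerDl].
Qed.
End Real2.

Section G.
Context {R : realType}.
Local Open Scope ereal_scope.
Lemma get_ub (f : nat -> R) : (forall n, (0 <= f n)%R) ->
  ereal_sup (range (fun n => (f n)%:E)) < +oo -> exists A : R, (0 <= A)%R /\ forall n, (f n <= A)%R.
Proof.
move=> f0 hS; set S := ereal_sup _ in hS.
have h2 n : (f n)%:E <= S by apply: ereal_sup_ubound; exists n.
have h0 : 0 <= S by apply: le_trans (h2 0%N); rewrite lee_fin.
have hS' : S = (fine S)%:E by rewrite fineK // ge0_fin_numE.
exists (fine S); split; first by rewrite -lee_fin -hS'.
by move=> n; rewrite -lee_fin -hS'.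
Qed.

Lemma get_q (f : nat -> R) : (forall n, (0 <= f n)%R) ->
  limn_esup (fun n => (f n)%:E) < 1%:E ->
  exists q : R, exists N, (0 < q)%R /\ (q < 1)%R /\ forall m, (N <= m)%N -> (f m <= q)%R.
Proof.
move=> f0; set u := fun n => (f n)%:E.
rewrite limn_esup_lim.
have -> : limn (esups u) = ereal_inf (range (esups u)).
  by apply/cvg_lim => //; apply: cvg_esups_inf.
move=> /ereal_inf_lt [_ [N _ <-]] hN.
set E := esups u N in hN.
have hE m : (N <= m)%N -> u m <= E by move=> Nm; apply: ereal_sup_ubound; exists m.
have E0 : 0 <= E by apply: le_trans (hE N (leqnn _)); rewrite lee_fin.
have hE' : E = (fine E)%:E by rewrite fineK // ge0_fin_numE // (lt_le_trans hN) // leey.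
have e0 : (0 <= fine E)%R by rewrite -lee_fin -hE'.
have e1 : (fine E < 1)%R by rewrite -lte_fin -hE'.
exists ((fine E + 1) / 2)%R, N; split; last split.
- by rewrite divr_gt0 // ltr_wpDl.
- by rewrite ltr_pdivrMr // mul1r ltrD2r.
move=> m Nm; apply: (@le_trans _ _ (fine E)).
  by rewrite -lee_fin -hE'; apply: hE.
by rewrite ler_pdivlMr // mulr_natr mulr2n lerD2l ltW.
Qed.
End G.

Section Main.
Variables (R : realType) (a b w : nat -> R[i]).
Hypothesis ha : forall n, a n != 0.
Variables (A q M : R) (N : nat).
Hypothesis A0 : 0 <= A.
Hypothesis hA : forall n, nc (w n * a n / a n.+1) <= A.
Hypothesis q0 : 0 < q.
Hypothesis q1 : q < 1.
Hypothesis hq : forall m, (N <= m)%N -> nc (b m / a m.+1) <= q.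
Hypothesis hM : forall m, nc (b m / a m.+1) <= M.

Let M0 : 0 <= M. Proof. have := hM 0%N; apply: le_trans; exact: nc_ge0. Qed.
Let K := 1 + M / q.
Let K1 : 1 <= K. Proof. by rewrite /K lerDl divr_ge0 // ltW. Qed.
Definition Wt m := K ^+ minn m N.
Lemma Wt_ge1 m : 1 <= Wt m. Proof. exact: exprn_ege1. Qed.
Lemma Wt_gt0 m : 0 < Wt m. Proof. exact: lt_le_trans ltr01 (Wt_ge1 m). Qed.
Lemma Wt_le m : Wt m <= K ^+ N.
Proof. by apply: ler_weXn2l => //; rewrite geq_minr. Qed.
Lemma Wt_step m : nc (b m / a m.+1) * Wt m <= q * Wt m.+1.
Proof.
rewrite /Wt; case: (ltnP m N) => hm.
  rewrite (minn_idPl hm) exprS mulrA ler_wpM2r ?exprn_ge0 //.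
    exact: le_trans ler01 K1.
  apply: le_trans (hM m) _.
  by rewrite /K mulrDr mulr1 mulrCA divff ?gt_eqF // mulr1 lerDr ltW.
rewrite (minn_idPr (leqW hm)) ler_wpM2r ?hq //.
exact: exprn_ge0 (le_trans ler01 K1).
Qed.

Fixpoint nus (lam : nat -> R[i]) m : R[i] :=
  if m is k.+1 then (ab_coef a b lam k * w k - b k * nus lam k) / a k.+1 else 0.
Definition lpv (f : nat -> R[i]) m : R[i] := if m is k.+1 then f k else 0.

Lemma nus_coef lam : ab_coef a b (nus lam) = Fw w (ab_coef a b lam).
Proof.
apply/funext => -[|k] /=.
  by rewrite /ab_coef /= mulr0 addr0.
rewrite [in LHS]/ab_coef /=; set X := ab_coef _ _ lam k; field; exact: ha.
Qed.

Lemma g_bound lam m : nc (ab_coef a b lam m * w m / a m.+1) <=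
  A * nc (lpv lam m.+1) + A * M * nc (lpv (lpv lam) m.+1).
Proof.
case: m => [|k] /=.
  rewrite /ab_coef addr0 expr0n /= addr0 sqrtr0 mulr0 addr0.
  have -> : a 0%N * lam 0%N * w 0%N / a 1%N = (w 0%N * a 0%N / a 1%N) * lam 0%N by field; exact: ha.
  by rewrite ncM ler_wpM2r ?nc_ge0.
rewrite /ab_coef.
have -> : (a k.+1 * lam k.+1 + b k * lam k) * w k.+1 / a k.+2 =
   (w k.+1 * a k.+1 / a k.+2) * lam k.+1 + (w k.+1 * a k.+1 / a k.+2) * (b k / a k.+1) * lam k.
  by field; rewrite !ha.
set al := w k.+1 * a k.+1 / a k.+2; set r := b k / a k.+1.
apply: le_trans (ncD _ _) _; rewrite (ncM al) (ncM (al * r)) (ncM al r); apply: lerD.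
  by apply: ler_pM; rewrite ?nc_ge0 ?hA.
apply: ler_pM; rewrite ?mulr_ge0 ?nc_ge0 //.
by apply: ler_pM; rewrite ?nc_ge0 ?hA ?hM.
Qed.

Lemma nu_bound lam m : nc (nus lam m.+1) <=
  nc (ab_coef a b lam m * w m / a m.+1) + nc (b m / a m.+1) * nc (nus lam m).
Proof.
rewrite /= mulrBl [b m * nus lam m / a m.+1]mulrAC -ncM.
by apply: ncB.
Qed.

Definition yv lam m := A * nc (lpv lam m) + A * M * nc (lpv (lpv lam) m).
Definition uv lam m := nc (nus lam m) / Wt m.

Lemma yv_ge0 lam m : 0 <= yv lam m.
Proof. by rewrite /yv addr_ge0 // ?mulr_ge0 ?nc_ge0. Qed.
Lemma uv_ge0 lam m : 0 <= uv lam m.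
Proof. by rewrite /uv divr_ge0 ?nc_ge0 // ltW ?Wt_gt0. Qed.
Lemma uv0 lam : uv lam 0%N = 0.
Proof. by rewrite /uv [nus lam 0]/= nc0 mul0r. Qed.

Lemma u_step lam m : uv lam m.+1 <= yv lam m.+1 + q * uv lam m.
Proof.
rewrite {1}/uv ler_pdivrMr ?Wt_gt0 //.
apply: le_trans (nu_bound lam m) _.
rewrite [in X in _ <= X]mulrDl; apply: lerD.
  apply: le_trans (g_bound lam m) _.
  apply: le_trans (_ : yv lam m.+1 * 1 <= _); first by rewrite mulr1.
  by apply: ler_wpM2l; [exact: yv_ge0 | exact: Wt_ge1].
have hW := Wt_gt0 m.
have -> : nc (b m / a m.+1) * nc (nus lam m) = (nc (b m / a m.+1) * Wt m) * uv lam m.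
  by rewrite /uv; field; rewrite gt_eqF.
rewrite [in X in _ <= X]mulrAC; apply: ler_wpM2r; [exact: uv_ge0 | exact: Wt_step].
Qed.

Lemma shift_sum (f : nat -> R[i]) p n : 0 < p ->
  \sum_(0 <= m < n) nc (lpv f m) `^ p <= \sum_(0 <= m < n) nc (f m) `^ p.
Proof.
move=> p0; case: n => [|n]; first by rewrite !big_geq.
rewrite big_nat_recl // [lpv f 0]/= nc0 powR0 ?gt_eqF // add0r.
rewrite big_nat_recr //=.
apply: le_trans (_ : \sum_(0 <= i < n) nc (f i) `^ p <= _); first by [].
by rewrite lerDl powR_ge0.
Qed.

Definition Bc := A * (1 + M) / (1 - q).
Definition Dc p := (K ^+ N) `^ p * ((2 * Bc) `^ p * 2).
Lemma Bc_ge0 : 0 <= Bc.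
Proof. apply: divr_ge0; [apply: mulr_ge0 => //; exact: addr_ge0 | rewrite subr_ge0; exact: ltW]. Qed.

Lemma y_pow lam m p : 1 <= p ->
  (yv lam m / (1 - q)) `^ p <=
  (2 * Bc) `^ p * (nc (lpv lam m) `^ p + nc (lpv (lpv lam) m) `^ p).
Proof.
move=> p1; have p0 : 0 < p by apply: lt_le_trans p1.
set X := nc (lpv lam m); set Y := nc (lpv (lpv lam) m).
have X0 : 0 <= X by apply: nc_ge0.
have Y0 : 0 <= Y by apply: nc_ge0.
have s0 : 0 < 1 - q by rewrite subr_gt0.
have h1 : yv lam m / (1 - q) <= (2 * Bc) * (2^-1 * X + (1 - 2^-1) * Y).
  have -> : (2 * Bc) * (2^-1 * X + (1 - 2^-1) * Y) = Bc * (X + Y).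
    by field.
  rewrite /Bc /yv -/X -/Y [in Z in _ <= Z]mulrAC ler_pM2r ?invr_gt0 //.
  have h3 := mulr_ge0 (mulr_ge0 A0 M0) X0.
  have h4 := mulr_ge0 A0 Y0.
  have -> : A * (1 + M) * (X + Y) = A * X + A * M * Y + (A * M * X + A * Y) by ring.
  by rewrite lerDl addr_ge0.
apply: le_trans (powR_le _ _ _ (ltW p0) _ h1) _.
  by apply: divr_ge0; [exact: yv_ge0 | exact: ltW].
have h2 : 0 <= 1 - 2^-1 :> R by rewrite subr_ge0 invf_le1 // ler1n.
have hz : 0 <= 2^-1 * X + (1 - 2^-1) * Y by rewrite addr_ge0 ?mulr_ge0 // invr_ge0.
rewrite powRM; [|by rewrite mulr_ge0 ?Bc_ge0|exact: hz].
apply: ler_wpM2l; first exact: powR_ge0.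
have t0 : 0 <= 2^-1 :> R by rewrite invr_ge0.
have t1 : 2^-1 <= 1 :> R by rewrite invf_le1 // ler1n.
apply: le_trans (convp p (2^-1) X Y p1 t0 t1 X0 Y0) _.
apply: lerD; rewrite -[Z in _ <= Z]mul1r; apply: ler_wpM2r; rewrite ?powR_ge0 //.
Qed.

Lemma KN_ge0 : 0 <= K ^+ N.
Proof. by apply: exprn_ge0; apply: le_trans ler01 K1. Qed.

Lemma lp_sum lam p n : 1 <= p ->
  \sum_(0 <= m < n) nc (nus lam m) `^ p <= Dc p * \sum_(0 <= m < n) nc (lam m) `^ p.
Proof.
move=> p1; have p0 : 0 < p by apply: lt_le_trans p1.
apply: (@le_trans _ _ ((K ^+ N) `^ p * \sum_(0 <= m < n) (uv lam m) `^ p)).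
  rewrite mulr_sumr; apply: ler_sum => i _.
  rewrite -powRM ?uv_ge0 ?KN_ge0 //; apply: powR_le; rewrite ?nc_ge0 ?(ltW p0) //.
  have -> : nc (nus lam i) = Wt i * uv lam i.
    by rewrite /uv mulrC divfK // gt_eqF // Wt_gt0.
  by apply: ler_wpM2r; [exact: uv_ge0 | exact: Wt_le].
rewrite /Dc -mulrA; apply: ler_wpM2l; first exact: powR_ge0.
apply: (@le_trans _ _ (\sum_(0 <= m < n) (yv lam m / (1 - q)) `^ p)).
  rewrite !big_mkord; apply: L_contr => //.
  - exact: ltW.
  - exact: uv_ge0.
  - exact: yv_ge0.
  - exact: uv0.
  - exact: u_step.
apply: (@le_trans _ _ (\sum_(0 <= m < n) ((2 * Bc) `^ p *
     (nc (lpv lam m) `^ p + nc (lpv (lpv lam) m) `^ p)))).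
  by apply: ler_sum => i _; apply: y_pow.
rewrite -mulr_sumr -mulrA; apply: ler_wpM2l; first exact: powR_ge0.
rewrite big_split /= mulr_natl mulr2n; apply: lerD.
  exact: shift_sum.
apply: le_trans (shift_sum _ _ _ p0) _; exact: shift_sum.
Qed.

Lemma Dc_ge0 p : 0 <= Dc p.
Proof. by rewrite /Dc !mulr_ge0 ?powR_ge0. Qed.

Lemma lp_part p : 1 <= p -> Fw_bounded_on a b w (in_lp p) (lp_norm p).
Proof.
move=> p1; have p0 : 0 < p by apply: lt_le_trans p1.
exists (Dc p `^ p^-1); split; first exact: powR_ge0.
move=> lam hlam; exists (nus lam).
have x0 (f : nat -> R[i]) n : 0 <= nc (f n) `^ p by apply: powR_ge0.
have hS := nnser_fin (fun n => nc (lam n) `^ p) 0 (x0 lam) hlam.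
set S := fine _ in hS.
have hpart n : \sum_(0 <= m < n) nc (lam m) `^ p <= S.
  by rewrite -lee_fin -hS; apply: nnser_ge; apply: x0.
have hnu : (\sum_(0 <= n <oo) (nc (nus lam n) `^ p)%:E <= (Dc p * S)%:E)%E.
  apply: nnser_le; first exact: x0.
  move=> n; apply: le_trans (lp_sum lam p n p1) _.
  by apply: ler_wpM2l; [exact: Dc_ge0 | exact: hpart].
have hnu_fin : in_lp p (nus lam) by apply: le_lt_trans hnu (ltry _).
split; first exact: hnu_fin.
split; first exact: nus_coef.
have hT := nnser_fin (fun n => nc (nus lam n) `^ p) 0 (x0 (nus lam)) hnu_fin.
rewrite /lp_norm -/S.
set T := fine _ in hT.
have T0 : 0 <= T by rewrite -lee_fin -hT; apply: nneseries_ge0 => i _ _; rewrite lee_fin.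
have TS : T <= Dc p * S by rewrite -lee_fin -hT.
have S0 : 0 <= S by rewrite -lee_fin -hS; apply: nneseries_ge0 => i _ _; rewrite lee_fin.
rewrite -powRM ?Dc_ge0 //; apply: powR_le => //.
by rewrite invr_ge0 ltW.
Qed.

Lemma lpv_bound (f : nat -> R[i]) (L : R) : 0 <= L -> (forall n, nc (f n) <= L) ->
  forall m, nc (lpv f m) <= L.
Proof. by move=> L0 h [|k]; [rewrite [lpv f 0]/= nc0 | exact: h]. Qed.

Lemma lpv_ev (f : nat -> R[i]) (e : R) N0 : 0 <= e -> (forall n, (N0 <= n)%N -> nc (f n) <= e) ->
  forall m, (N0.+1 <= m)%N -> nc (lpv f m) <= e.
Proof. by move=> e0 h [|k] //= hk; apply: h. Qed.

Lemma c0_part : Fw_bounded_on a b w (@in_c0 R) (@sup_norm R).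
Proof.
exists (K ^+ N * Bc); split; first by rewrite mulr_ge0 ?KN_ge0 ?Bc_ge0.
move=> lam hlam.
have hl : forall e, 0 < e -> exists N0, forall n, (N0 <= n)%N -> nc (lam n) <= e.
  move=> e e0; have [N0 hN0] := @ev_get _ (fun n => nc (lam n)) hlam e e0; exists N0 => n hn.
  by have := hN0 n hn; rewrite ger0_norm ?nc_ge0.
have [N1 hN1] := hl 1 ltr01.
set Bl := 1 + \sum_(0 <= i < N1) nc (lam i).
have sum0 : 0 <= \sum_(0 <= i < N1) nc (lam i) by apply: sumr_ge0 => i _; apply: nc_ge0.
have hBl n : nc (lam n) <= Bl.
  case: (ltnP n N1) => hn; last first.
    by apply: le_trans (hN1 n hn) _; rewrite lerDl.
  rewrite /Bl (bigD1_seq n) /= ?iota_uniq ?mem_index_iota //.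
  rewrite addrCA lerDl addr_ge0 //; apply: sumr_ge0 => i _; exact: nc_ge0.
have [hL1 [hL2 hL3]] := sup_props (fun n => nc (lam n)) Bl (fun n => nc_ge0 _) hBl.
rewrite -/(sup_norm lam) in hL2 hL3.
set L := sup_norm lam in hL2 hL3 *.
have L0 : 0 <= L by apply: le_trans (hL2 0%N); apply: nc_ge0.
set Yb := A * (1 + M) * L.
have Yb0 : 0 <= Yb by rewrite /Yb !mulr_ge0 // addr_ge0.
have hlpL := lpv_bound _ _ L0 hL2.
have hlpL2 := lpv_bound _ _ L0 hlpL.
have hy m : yv lam m <= Yb.
  rewrite /yv /Yb mulrDr mulr1 mulrDl; apply: lerD.
    by apply: ler_wpM2l.
  by apply: ler_wpM2l; rewrite ?mulr_ge0.
have hu := contr_bound (uv lam) (yv lam) q Yb (ltW q0) q1 Yb0 (uv0 lam) hy (u_step lam).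
have s0 : 0 < 1 - q by rewrite subr_gt0.
have hnuW m : nc (nus lam m) = Wt m * uv lam m.
  by rewrite /uv mulrC divfK // gt_eqF // Wt_gt0.
have hnu m : nc (nus lam m) <= K ^+ N * Bc * L.
  rewrite hnuW; apply: le_trans (_ : Wt m * (Yb / (1 - q)) <= _).
    by apply: ler_wpM2l; [exact: ltW (Wt_gt0 m) | exact: hu].
  have -> : K ^+ N * Bc * L = K ^+ N * (Yb / (1 - q)) by rewrite /Bc /Yb; field; rewrite gt_eqF.
  by apply: ler_wpM2r; [rewrite divr_ge0 // ltW | exact: Wt_le].
exists (nus lam); split; last split.
- apply: ev_put => e e0.
  have KN0 : 0 < K ^+ N by apply: exprn_gt0; apply: lt_le_trans ltr01 K1.
  have hyev : forall e', 0 < e' -> exists N0, forall n, (N0 <= n)%N -> yv lam n <= e'.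
    move=> e' e'0.
    set c := A * (1 + M) + 1.
    have c0 : 0 < c by rewrite /c ltr_wpDl // mulr_ge0 // addr_ge0.
    have [N0 hN0] := hl (e' / c) (divr_gt0 e'0 c0).
    have ed0 : 0 <= e' / c by rewrite divr_ge0 // ltW.
    have h1 := lpv_ev _ _ _ ed0 hN0.
    have h2 := lpv_ev _ _ _ ed0 h1.
    exists N0.+2 => n hn.
    apply: le_trans (_ : A * (e' / c) + A * M * (e' / c) <= _).
      apply: lerD; apply: ler_wpM2l; rewrite ?mulr_ge0 //.
        by apply: h1; apply: leq_trans hn.
      exact: h2.
    have -> : A * (e' / c) + A * M * (e' / c) = (A * (1 + M)) * (e' / c) by ring.
    apply: le_trans (_ : c * (e' / c) <= _).
      by apply: ler_wpM2r => //; rewrite /c lerDl.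
    by rewrite mulrC divfK // gt_eqF.
  have eK : 0 < e / K ^+ N by apply: divr_gt0.
  have [N0 hN0] := contr_cvg (uv lam) (yv lam) q (Yb / (1 - q)) (ltW q0) q1 (uv_ge0 lam) hu hyev (u_step lam) (e / K ^+ N) eK.
  exists N0 => n hn; rewrite ger0_norm ?nc_ge0 // hnuW.
  apply: le_trans (_ : K ^+ N * (e / K ^+ N) <= _); last by rewrite mulrC divfK // gt_eqF.
  by apply: ler_pM; [exact: ltW (Wt_gt0 n) | exact: uv_ge0 | exact: Wt_le | exact: hN0].
- exact: nus_coef.
have := sup_props (fun n => nc (nus lam n)) (K ^+ N * Bc * L) (fun n => nc_ge0 _) hnu.
by case=> _ [_].
Qed.

Lemma c_bound n : nc (cseq a b w n) <= A * M + A * M.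
Proof.
rewrite /cseq.
have -> : w n.+1 * (b n / a n.+2) = (w n.+1 * a n.+1 / a n.+2) * (b n / a n.+1).
  by field; rewrite !ha.
rewrite [w n * (a n / a n.+1)]mulrA.
apply: le_trans (ncB _ _) _; apply: lerD; rewrite ncM;
  by apply: ler_pM; rewrite ?nc_ge0 ?hA ?hM.
Qed.

Lemma claim1 : (ereal_sup (range (fun n => (nc (cseq a b w n))%:E)) < +oo)%E.
Proof.
apply: (@le_lt_trans _ _ (A * M + A * M)%:E); last exact: ltry.
by apply: ub_ereal_sup => _ [n _ <-]; rewrite lee_fin c_bound.
Qed.

Lemma prod_bound j d : Wt (j + 2) * nc (\prod_(3 <= k < d.+3) (b (j + k - 1)%N / a (j + k)%N))
   <= q ^+ d * Wt (j + d + 2).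
Proof.
elim: d => [|d ih].
  by rewrite big_geq // expr0 mul1r addn0 Normc.normc1 mulr1.
rewrite big_nat_recr //= ncM.
have -> : (j + d.+3 - 1 = j + d + 2)%N by lia.
have -> : (j + d.+3 = (j + d + 2).+1)%N by lia.
have -> : (j + d.+1 + 2 = (j + d + 2).+1)%N by lia.
rewrite mulrA exprSr.
apply: le_trans (_ : q ^+ d * Wt (j + d + 2) * nc (b (j + d + 2)%N / a (j + d + 2).+1) <= _).
  by apply: ler_wpM2r; rewrite ?nc_ge0.
rewrite -!mulrA; apply: ler_wpM2l; first by rewrite exprn_ge0 // ltW.
by rewrite mulrC; apply: Wt_step.
Qed.

Lemma prod_bound2 j n : nc (\prod_(3 <= k < n.+1) (b (j + k - 1)%N / a (j + k)%N))
   <= K ^+ N * q ^+ (n - 2).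
Proof.
have KN1 : 1 <= K ^+ N by apply: exprn_ege1.
case: (ltnP n 2) => hn.
  rewrite big_geq; last by lia.
  by rewrite Normc.normc1 (_ : (n - 2 = 0)%N) ?expr0 ?mulr1 //; lia.
have -> : n.+1 = (n - 2).+3 by lia.
set P := nc _.
have P0 : 0 <= P by apply: nc_ge0.
apply: le_trans (_ : Wt (j + 2) * P <= _).
  by rewrite -[X in X <= _]mul1r; apply: ler_wpM2r => //; apply: Wt_ge1.
apply: le_trans (prod_bound _ _) _.
rewrite mulrC; apply: ler_wpM2r; first by rewrite exprn_ge0 // ltW.
exact: Wt_le.
Qed.

Lemma geo_bound k : (1 - q) * \sum_(3 <= n < k) q ^+ (n - 2) <= 1.
Proof.
case: (ltnP k 3) => hk.
  by rewrite big_geq ?mulr0 //; lia.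
have -> : k = ((k - 3) + 3)%N by lia.
have h d : (1 - q) * \sum_(3 <= n < d + 3) q ^+ (n - 2) = q - q ^+ d.+1.
  elim: d => [|d ih]; first by rewrite big_geq // mulr0 expr1 subrr.
  rewrite addSn big_nat_recr /=; last by lia.
  rewrite mulrDr ih (_ : (d + 3 - 2 = d.+1)%N); last by lia.
  by rewrite !exprS; ring.
rewrite h; apply: le_trans (_ : q <= 1); last exact: ltW.
by rewrite gerBl exprn_ge0 // ltW.
Qed.

Lemma claim2 : (\sum_(3 <= n <oo)
      ereal_sup (range (fun j => (nc (cseq a b w j *
          \prod_(3 <= k < n.+1) (b (j + k - 1)%N / a (j + k)%N)))%:E))
     < +oo)%E.
Proof.
set C := (A * M + A * M) * K ^+ N.
have C0 : 0 <= C by rewrite /C !mulr_ge0 ?addr_ge0 ?mulr_ge0 ?KN_ge0.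
have s0 : 0 < 1 - q by rewrite subr_gt0.
apply: (@le_lt_trans _ _ (\sum_(3 <= n <oo) (C * q ^+ (n - 2))%:E)%E).
  apply: lee_nneseries.
    move=> n _ _; apply: (@le_trans _ _ (nc (cseq a b w 0%N *
          \prod_(3 <= k < n.+1) (b (0 + k - 1)%N / a (0 + k)%N)))%:E).
      by rewrite lee_fin nc_ge0.
    by apply: ereal_sup_ubound; exists 0%N.
  move=> n _; apply: ub_ereal_sup => _ [j _ <-]; rewrite lee_fin ncM /C -mulrA.
  apply: ler_pM; rewrite ?nc_ge0 ?c_bound //.
  exact: prod_bound2.
apply: (@le_lt_trans _ _ (C / (1 - q))%:E); last exact: ltry.
apply: nnser_le.
  by move=> n; rewrite mulr_ge0 // exprn_ge0 // ltW.
move=> k; rewrite -mulr_sumr ler_pdivlMr // mulrC -mulrA.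
rewrite [X in _ * X]mulrA -/C mulrCA -[Z in _ <= Z]mulr1; apply: ler_wpM2l => //.
exact: geo_bound.
Qed.

Lemma all4 :
  (ereal_sup (range (fun n => (Normc.normc (cseq a b w n))%:E)) < +oo)%E /\
  (\sum_(3 <= n <oo)
      ereal_sup (range (fun j => (Normc.normc (cseq a b w j *
          \prod_(3 <= k < n.+1) (b (j + k - 1)%N / a (j + k)%N)))%:E))
     < +oo)%E /\
  (forall p : R, 1 <= p ->
     Fw_bounded_on a b w (in_lp p) (lp_norm p)) /\
  Fw_bounded_on a b w (@in_c0 R) (@sup_norm R).
Proof.
split; first exact: claim1.
split; first exact: claim2.
split; first exact: lp_part.
exact: c0_part.
Qed.
End Main.


Theorem mainTheorem3 (R : realType) (a b w : nat -> R[i])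
  (ha : forall n, a n != 0) (hb : forall n, b n != 0)
  (hR : (limn_esup (fun n => ((Normc.normc (a n) + Normc.normc (b n)) `^ (n%:R)^-1)%:E)
          < +oo)%E)
  (hw : (ereal_sup (range (fun n => (Normc.normc (w n * a n / a n.+1))%:E)) < +oo)%E)
  (hba : (limn_esup (fun n => (Normc.normc (b n / a n.+1))%:E) < 1%:E)%E) :
  (ereal_sup (range (fun n => (Normc.normc (cseq a b w n))%:E)) < +oo)%E /\
  (\sum_(3 <= n <oo)
      ereal_sup (range (fun j => (Normc.normc (cseq a b w j *
          \prod_(3 <= k < n.+1) (b (j + k - 1)%N / a (j + k)%N)))%:E))
     < +oo)%E /\
  (forall p : R, 1 <= p ->
     Fw_bounded_on a b w (in_lp p) (lp_norm p)) /\
  Fw_bounded_on a b w (@in_c0 R) (@sup_norm R).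

Proof.
have [A [A0 hA]] := get_ub (fun n => Normc.normc (w n * a n / a n.+1)) (fun n => nc_ge0 _) hw.
have [q [N [q0 [q1 hq]]]] := get_q (fun n => Normc.normc (b n / a n.+1)) (fun n => nc_ge0 _) hba.
set M := \sum_(0 <= i < N) Normc.normc (b i / a i.+1) + 1.
have sum0 : 0 <= \sum_(0 <= i < N) Normc.normc (b i / a i.+1).
  by apply: sumr_ge0 => i _; apply: nc_ge0.
have hM m : Normc.normc (b m / a m.+1) <= M.
  case: (ltnP m N) => hm.
    rewrite /M (bigD1_seq m) /= ?iota_uniq ?mem_index_iota //.
    rewrite -addrA lerDl addr_ge0 //; apply: sumr_ge0 => i _; exact: nc_ge0.
  apply: le_trans (hq m hm) _; apply: le_trans (ltW q1) _.
  by rewrite /M lerDr.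
have [h1 [h2 [h3 h4]]] := @all4 R a b w ha A q M N A0 hA q0 q1 hq hM.
split; first exact: h1.
split; first exact: h2.
split; first exact: h3.
exact: h4.
Qed.
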